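(* Let $l\ge1$ and $n\ge4l+2$. For any equilateral $(2l+1)$-pointed star $S$ inscribed in $P_n$, the number of points of $S$ that are vertices of $P_n$ or midpoints of edges of $P_n$ is either $0$ or $\gcd(n,2l+1)$.
   Context: $P_n$ is the boundary of the regular polygon in $\mathbb{R}^2$ with vertices the $n$-th roots of unity, Euclidean metric $\|x-y\|$. $d_{P_n}(x,y)\in[0,1)$ is the counterclockwise arc length of $P_n$ from $x$ to $y$ divided by the perimeter. The directed Vietoris–Rips graph $\mathrm{VR}_<(P_n;r)$ has vertex set $P_n$ and, for distinct $u,w$ with $\|u-w\|<r$, the edge $u\to w$ if $d_{P_n}(u,w)<d_{P_n}(w,u)$, else $w\to u$; it is cyclic if whenever $u_0\to u_1$, every $w$ strictly counterclockwise-between them has $u_0\to w$ and $w\to u_1$. $r_n=\sup\{r\ge0:\mathrm{VR}_<(P_n;r')\text{ cyclic for all }0<r'<r\}$. For $0<r<r_n$, $g_r(p)$ is the first point $w$ met moving counterclockwise from $p$ with $\|p-w\|=r$, and $g_{r_n}=\lim_{r\to r_n}g_r$. An equilateral $(2l+1)$-pointed star of side $r\in(0,r_n]$ inscribed in $P_n$ is a cyclic sequence $u_0,\dots,u_{2l}$ with $u_{i+1}=g_r(u_i)$ (indices mod $2l+1$) and $\sum_i d_{P_n}(u_i,u_{i+1})=l$. *)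

(* Defs.v *)
From Stdlib Require Import Reals Lra Lia List.
Open Scope R_scope.

Definition floorR (x : R) : Z := (up x - 1)%Z.
Definition frac (x : R) : R := x - IZR (floorR x).

Definition vert (n : nat) (k : R) : R * R :=
  (cos (2 * PI * k / INR n), sin (2 * PI * k / INR n)).

(* Arc-length parametrisation of P_n by t (period 1, t = fraction of the
   perimeter travelled counterclockwise from vertex 0). *)
Definition pt (n : nat) (t : R) : R * R :=
  let m := INR n * t in
  let k := IZR (floorR m) in
  let s := m - k in
  ((1 - s) * fst (vert n k) + s * fst (vert n (k + 1)),
   (1 - s) * snd (vert n k) + s * snd (vert n (k + 1))).

Definition edist (p q : R * R) : R :=
  sqrt ((fst p - fst q) ^ 2 + (snd p - snd q) ^ 2).

(* points of P_n are represented by their parameters in [0,1) *)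
Definition inP (t : R) : Prop := 0 <= t < 1.

(* d_{P_n}(pt a, pt b): normalized counterclockwise arc length *)
Definition dP (a b : R) : R := frac (b - a).

(* directed Vietoris--Rips edge pt a -> pt b in VR_<(P_n; r) *)
Definition vr_edge (n : nat) (r a b : R) : Prop :=
  inP a /\ inP b /\ a <> b /\ edist (pt n a) (pt n b) < r /\ dP a b <= dP b a.

Definition vr_cyclic (n : nat) (r : R) : Prop :=
  forall a b c, vr_edge n r a b -> inP c -> 0 < dP a c < dP a b ->
    vr_edge n r a c /\ vr_edge n r c b.

(* the set whose supremum is r_n *)
Definition rn_set (n : nat) (r : R) : Prop :=
  0 <= r /\ forall r', 0 < r' < r -> vr_cyclic n r'.

(* is_g n r a b : pt b = g_r(pt a), the first point met moving
   counterclockwise from pt a at Euclidean distance r *)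
Definition is_g (n : nat) (r a b : R) : Prop :=
  inP a /\ inP b /\
  exists s, 0 < s < 1 /\ b = frac (a + s) /\
    edist (pt n a) (pt n (a + s)) = r /\
    forall s', 0 < s' < s -> edist (pt n a) (pt n (a + s')) <> r.

(* g_lim n rn a b : pt b = g_{r_n}(pt a) = lim_{r -> r_n} g_r(pt a) (limit in R^2) *)
Definition g_lim (n : nat) (rn a b : R) : Prop :=
  inP a /\ inP b /\
  forall eps, 0 < eps -> exists delta, 0 < delta /\
    forall r, rn - delta < r < rn ->
      (exists c, is_g n r a c) /\
      (forall c, is_g n r a c -> edist (pt n c) (pt n b) < eps).

Definition g_step (n : nat) (rn r a b : R) : Prop :=
  (0 < r < rn /\ is_g n r a b) \/ (r = rn /\ g_lim n rn a b).

Definition is_star (n : nat) (rn : R) (l : nat) (r : R) (u : nat -> R) : Prop :=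
  0 < r <= rn /\
  (forall i, (i < 2 * l + 1)%nat -> inP (u i)) /\
  (forall i, (i < 2 * l + 1)%nat ->
     g_step n rn r (u i) (u ((i + 1) mod (2 * l + 1))%nat)) /\
  sum_f_R0 (fun i => dP (u i) (u ((i + 1) mod (2 * l + 1))%nat)) (2 * l) = INR l.

Definition is_special (n : nat) (p : R * R) : Prop :=
  exists k : nat, (k < n)%nat /\
    (p = vert n (INR k) \/
     p = ((fst (vert n (INR k)) + fst (vert n (INR k + 1))) / 2,
          (snd (vert n (INR k)) + snd (vert n (INR k + 1))) / 2)).

Definition num_special (n l : nat) (u : nat -> R) (N : nat) : Prop :=
  exists L : list (R * R), NoDup L /\ length L = N /\
    forall p, In p L <->
      ((exists i, (i < 2 * l + 1)%nat /\ p = pt n (u i)) /\ is_special n p).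

(* Main.v *)
Require Import Defs.
From Stdlib Require Import Reals Lra Lia List.
From Stdlib Require Import ZArith Arith.
Open Scope R_scope.


Lemma floor_spec x : IZR (floorR x) <= x < IZR (floorR x) + 1.
Proof.
  unfold floorR. destruct (archimed x) as [H1 H2].
  rewrite minus_IZR. split; lra.
Qed.

Lemma floor_unique k x : IZR k <= x < IZR k + 1 -> floorR x = k.
Proof.
  intros [H1 H2]. unfold floorR.
  assert (up x = (k + 1)%Z) as ->.
  { symmetry. apply tech_up; rewrite plus_IZR; lra. }
  lia.
Qed.

Lemma floor_add_int x z : floorR (x + IZR z) = (floorR x + z)%Z.
Proof.
  apply floor_unique. rewrite plus_IZR. pose proof (floor_spec x). lra.
Qed.

Lemma frac_range x : 0 <= frac x < 1.
Proof. unfold frac. pose proof (floor_spec x). lra. Qed.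

Lemma frac_id x : 0 <= x < 1 -> frac x = x.
Proof. intros H. unfold frac. rewrite (floor_unique 0 x); simpl; lra. Qed.

Lemma frac_add_int x z : frac (x + IZR z) = frac x.
Proof. unfold frac. rewrite floor_add_int, plus_IZR. ring. Qed.

Lemma frac_int_diff x : exists z, x = frac x + IZR z.
Proof. exists (floorR x). unfold frac. ring. Qed.

Lemma int_lt1 (z : Z) : -1 < IZR z < 1 -> z = 0%Z.
Proof. intros [H1 H2]. apply lt_IZR in H1. apply lt_IZR in H2. lia. Qed.

Section Pt.
Variable n : nat.
Hypothesis Hn : (6 <= n)%nat.

Definition NN := INR n.
Lemma NN_pos : 0 < NN.
Proof. unfold NN. apply lt_0_INR. lia. Qed.

Definition cth (k : R) := cos (2 * PI * k / INR n).
Definition sth (k : R) := sin (2 * PI * k / INR n).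

Lemma pt_on_edge (k : Z) t : IZR k <= INR n * t <= IZR k + 1 ->
  pt n t = ((1 - (INR n * t - IZR k)) * cth (IZR k) + (INR n * t - IZR k) * cth (IZR k + 1),
            (1 - (INR n * t - IZR k)) * sth (IZR k) + (INR n * t - IZR k) * sth (IZR k + 1)).
Proof.
  intros [H1 H2]. unfold pt, vert, cth, sth; simpl.
  destruct (Rlt_or_le (INR n * t) (IZR k + 1)) as [H3|H3].
  - rewrite (floor_unique k); auto.
  - assert (E : INR n * t = IZR k + 1) by lra.
    rewrite E. rewrite (floor_unique (k+1)); rewrite plus_IZR; [|lra].
    f_equal; ring_simplify; replace (IZR k + 1 - IZR k) with 1 by ring;
    replace (IZR k + 1 + 1) with (IZR k + 2) by ring; ring.
Qed.

Lemma pt_edge_floor t : let k := floorR (INR n * t) in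
  pt n t = ((1 - (INR n * t - IZR k)) * cth (IZR k) + (INR n * t - IZR k) * cth (IZR k + 1),
            (1 - (INR n * t - IZR k)) * sth (IZR k) + (INR n * t - IZR k) * sth (IZR k + 1)).
Proof. intros k. apply pt_on_edge. pose proof (floor_spec (INR n * t)). fold k in H. lra. Qed.

Definition ca := cos (2 * PI / INR n).
Definition sa := sin (2 * PI / INR n).
Definition rot (p : R * R) := (fst p * ca - snd p * sa, fst p * sa + snd p * ca).

Lemma cth_succ k : cth (k + 1) = cth k * ca - sth k * sa.
Proof.
  unfold cth, sth, ca, sa. rewrite <- cos_plus. f_equal.
  pose proof NN_pos. unfold NN in H. field. lra.
Qed.
Lemma sth_succ k : sth (k + 1) = sth k * ca + cth k * sa.
Proof.
  unfold cth, sth, ca, sa. rewrite <- sin_plus. f_equal.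
  pose proof NN_pos. unfold NN in H. field. lra.
Qed.

Lemma pt_shift t : pt n (t + / INR n) = rot (pt n t).
Proof.
  pose proof NN_pos as HN; unfold NN in HN.
  set (k := floorR (INR n * t)).
  pose proof (floor_spec (INR n * t)) as Hk. fold k in Hk.
  rewrite (pt_on_edge (k+1) (t + / INR n)).
  2:{ rewrite plus_IZR. replace (INR n * (t + / INR n)) with (INR n * t + 1) by (field; lra). lra. }
  rewrite (pt_on_edge k t) by lra.
  replace (INR n * (t + / INR n)) with (INR n * t + 1) by (field; lra).
  rewrite plus_IZR. unfold rot; simpl.
  replace (INR n * t + 1 - (IZR k + 1)) with (INR n * t - IZR k) by ring.
  rewrite (cth_succ (IZR k + 1)), (sth_succ (IZR k+1)).
  rewrite (cth_succ (IZR k)), (sth_succ (IZR k)). f_equal; ring.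
Qed.

Lemma cth_per k : cth (k + INR n) = cth k.
Proof.
  pose proof NN_pos as HN; unfold NN in HN.
  unfold cth. replace (2 * PI * (k + INR n) / INR n) with (2 * PI * k / INR n + 2 * INR 1 * PI).
  apply cos_period. simpl. field. lra.
Qed.
Lemma sth_per k : sth (k + INR n) = sth k.
Proof.
  pose proof NN_pos as HN; unfold NN in HN.
  unfold sth. replace (2 * PI * (k + INR n) / INR n) with (2 * PI * k / INR n + 2 * INR 1 * PI).
  apply sin_period. simpl. field. lra.
Qed.

Lemma pt_period t : pt n (t + 1) = pt n t.
Proof.
  pose proof NN_pos as HN; unfold NN in HN.
  set (k := floorR (INR n * t)).
  pose proof (floor_spec (INR n * t)) as Hk. fold k in Hk.
  rewrite (pt_on_edge (k + Z.of_nat n) (t + 1)).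
  2:{ rewrite plus_IZR, <- INR_IZR_INZ. lra. }
  rewrite (pt_on_edge k t) by lra.
  rewrite plus_IZR, <- INR_IZR_INZ.
  replace (IZR k + INR n + 1) with (IZR k + 1 + INR n) by ring.
  rewrite !cth_per, !sth_per. f_equal; ring_simplify; ring.
Qed.



Lemma pt_nat t m : pt n (t + INR m) = pt n t.
Proof.
  induction m as [|m IH]; [simpl; rewrite Rplus_0_r; auto|].
  rewrite S_INR, <- Rplus_assoc, pt_period. auto.
Qed.

Lemma pt_int t z : pt n (t + IZR z) = pt n t.
Proof.
  destruct (Z_le_gt_dec 0 z).
  - rewrite <- (Z2Nat.id z) by lia. rewrite <- INR_IZR_INZ. apply pt_nat.
  - replace z with (- Z.of_nat (Z.to_nat (-z)))%Z by lia.
    rewrite opp_IZR, <- INR_IZR_INZ.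
    rewrite <- (pt_nat (t + - INR (Z.to_nat (-z))) (Z.to_nat (-z))).
    f_equal. ring.
Qed.

Lemma pt_frac t : pt n (frac t) = pt n t.
Proof.
  unfold frac. replace (t - IZR (floorR t)) with (t + IZR (- floorR t)) by (rewrite opp_IZR; ring).
  apply pt_int.
Qed.

Lemma cth_neg k : cth (- k) = cth k.
Proof. unfold cth. rewrite <- cos_neg. f_equal. field. pose proof NN_pos. unfold NN in H; lra. Qed.
Lemma sth_neg k : sth (- k) = - sth k.
Proof. unfold sth. rewrite <- sin_neg. f_equal. field. pose proof NN_pos. unfold NN in H; lra. Qed.

Lemma pt_neg t : pt n (- t) = (fst (pt n t), - snd (pt n t)).
Proof.
  set (k := floorR (INR n * t)).
  pose proof (floor_spec (INR n * t)) as Hk. fold k in Hk.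
  rewrite (pt_on_edge (- k - 1) (- t)).
  2:{ rewrite minus_IZR, opp_IZR. lra. }
  rewrite (pt_on_edge k t) by lra. simpl.
  rewrite minus_IZR, opp_IZR.
  replace (- IZR k - 1 + 1) with (- IZR k) by ring.
  replace (- IZR k - 1) with (- (IZR k + 1)) by ring.
  rewrite !cth_neg, !sth_neg. f_equal; ring.
Qed.

End Pt.


Section D.
Variable n : nat.
Hypothesis Hn : (6 <= n)%nat.

Definition D (a b : R) := edist (pt n a) (pt n b).

Lemma NNpos : 0 < INR n.
Proof. apply lt_0_INR. lia. Qed.

Lemma D_sym a b : D a b = D b a.
Proof. unfold D, edist. f_equal. ring. Qed.

Lemma D_nonneg a b : 0 <= D a b.
Proof. unfold D, edist. apply sqrt_pos. Qed.

Lemma D_self a : D a a = 0.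
Proof. unfold D, edist. replace ((fst (pt n a) - fst (pt n a)) ^ 2 + (snd (pt n a) - snd (pt n a)) ^ 2) with 0 by ring. apply sqrt_0. Qed.

Lemma ca_sa : ca n * ca n + sa n * sa n = 1.
Proof. unfold ca, sa. pose proof (sin2_cos2 (2 * PI / INR n)). unfold Rsqr in H. lra. Qed.

Lemma edist_rot p q : edist (rot n p) (rot n q) = edist p q.
Proof.
  unfold edist, rot; simpl. f_equal. pose proof ca_sa.
  set (c := ca n) in *. set (s := sa n) in *.
  transitivity (((fst p - fst q) ^ 2 + (snd p - snd q) ^ 2) * (c * c + s * s)); [ring|].
  rewrite H. ring.
Qed.

Lemma D_shift a b : D (a + / INR n) (b + / INR n) = D a b.
Proof. unfold D. rewrite !pt_shift by auto. apply edist_rot. Qed.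

Lemma D_shift_nat a b (j : nat) : D (a + INR j / INR n) (b + INR j / INR n) = D a b.
Proof.
  pose proof NNpos.
  induction j as [|j IH].
  - simpl. unfold Rdiv. rewrite Rmult_0_l, !Rplus_0_r. auto.
  - rewrite S_INR. replace (a + (INR j + 1) / INR n) with ((a + INR j / INR n) + / INR n) by (field; lra).
    replace (b + (INR j + 1) / INR n) with ((b + INR j / INR n) + / INR n) by (field; lra).
    rewrite D_shift. auto.
Qed.

Lemma D_shiftZ a b (j : Z) : D (a + IZR j / INR n) (b + IZR j / INR n) = D a b.
Proof.
  destruct (Z_le_gt_dec 0 j).
  - rewrite <- (Z2Nat.id j) by lia. rewrite <- INR_IZR_INZ. apply D_shift_nat.
  - replace j with (- Z.of_nat (Z.to_nat (-j)))%Z by lia.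
    rewrite opp_IZR, <- INR_IZR_INZ.
    set (m := Z.to_nat (-j)).
    rewrite <- (D_shift_nat (a + - INR m / INR n) (b + - INR m / INR n) m).
    f_equal; field; pose proof NNpos; lra.
Qed.

Lemma D_intl a b z : D (a + IZR z) b = D a b.
Proof. unfold D. rewrite pt_int by auto. auto. Qed.
Lemma D_intr a b z : D a (b + IZR z) = D a b.
Proof. unfold D. rewrite (pt_int n Hn b) by auto. auto. Qed.

Lemma D_neg a b : D (- a) (- b) = D a b.
Proof. unfold D, edist. rewrite !pt_neg by auto. simpl. f_equal. ring. Qed.



Lemma D_refl (j : Z) a b : D (IZR j / INR n - a) (IZR j / INR n - b) = D a b.
Proof.
  replace (IZR j / INR n - a) with (- a + IZR j / INR n) by ring.
  replace (IZR j / INR n - b) with (- b + IZR j / INR n) by ring.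
  rewrite D_shiftZ. apply D_neg.
Qed.

End D.


Section C.
Variable n : nat.
Hypothesis Hn : (6 <= n)%nat.

Lemma cth_bd k : -1 <= cth n k <= 1.
Proof. unfold cth. apply COS_bound. Qed.
Lemma sth_bd k : -1 <= sth n k <= 1.
Proof. unfold sth. apply SIN_bound. Qed.

Lemma lip_aux d w : 0 <= d -> -2 <= w <= 2 -> Rabs (d * w) <= 2 * d.
Proof.
  intros. unfold Rabs. destruct (Rcase_abs (d*w)); nra.
Qed.

Lemma lip_gen (g : R -> R) (sel : R * R -> R)
  (Hb : forall k, -1 <= g k <= 1)
  (Hsel : forall (k:Z) t, IZR k <= INR n * t <= IZR k + 1 ->
     sel (pt n t) = (1 - (INR n * t - IZR k)) * g (IZR k) + (INR n * t - IZR k) * g (IZR k + 1))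
  x y : x <= y <= x + / INR n -> Rabs (sel (pt n y) - sel (pt n x)) <= 2 * INR n * (y - x).
Proof.
  intros [H1 H2]. pose proof (NNpos n Hn) as HN.
  set (k := floorR (INR n * x)).
  pose proof (floor_spec (INR n * x)) as Hk. fold k in Hk.
  assert (Hy : INR n * y <= INR n * x + 1).
  { replace (INR n * x + 1) with (INR n * (x + / INR n)) by (field; lra).
    apply Rmult_le_compat_l; lra. }
  assert (Hxy : INR n * x <= INR n * y) by (apply Rmult_le_compat_l; lra).
  rewrite (Hsel k x) by lra.
  destruct (Rle_or_lt (INR n * y) (IZR k + 1)).
  - rewrite (Hsel k y) by lra.
    replace ((1 - (INR n * y - IZR k)) * g (IZR k) + (INR n * y - IZR k) * g (IZR k + 1) -
       ((1 - (INR n * x - IZR k)) * g (IZR k) + (INR n * x - IZR k) * g (IZR k + 1)))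
      with ((INR n * y - INR n * x) * (g (IZR k + 1) - g (IZR k))) by ring.
    replace (2 * INR n * (y - x)) with (2 * (INR n * y - INR n * x)) by ring.
    apply lip_aux; [lra|]. pose proof (Hb (IZR k)); pose proof (Hb (IZR k + 1)); lra.
  - rewrite (Hsel (k+1)%Z y) by (rewrite plus_IZR; lra).
    rewrite plus_IZR.
    replace ((1 - (INR n * y - (IZR k + 1))) * g (IZR k + 1) + (INR n * y - (IZR k + 1)) * g (IZR k + 1 + 1) -
      ((1 - (INR n * x - IZR k)) * g (IZR k) + (INR n * x - IZR k) * g (IZR k + 1)))
    with ((INR n * y - (IZR k + 1)) * (g (IZR k + 1 + 1) - g (IZR k + 1)) +
          (IZR k + 1 - INR n * x) * (g (IZR k + 1) - g (IZR k))) by ring.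
    eapply Rle_trans; [apply Rabs_triang|].
    replace (2 * INR n * (y - x)) with (2 * (INR n * y - (IZR k + 1)) + 2 * (IZR k + 1 - INR n * x)) by ring.
    pose proof (Hb (IZR k)); pose proof (Hb (IZR k + 1)); pose proof (Hb (IZR k + 1 + 1)).
    apply Rplus_le_compat; apply lip_aux; lra.
Qed.

Lemma cont_gen (f : R -> R)
  (Hl : forall x y, x <= y <= x + / INR n -> Rabs (f y - f x) <= 2 * INR n * (y - x)) :
  continuity f.
Proof.
  pose proof (NNpos n Hn) as HN.
  intros x. unfold continuity_pt, continue_in, limit1_in, limit_in. simpl. unfold R_dist.
  intros eps Heps.
  exists (Rmin (/ INR n) (eps / (2 * INR n + 1))). split.
  { apply Rmin_pos. apply Rinv_0_lt_compat; lra. apply Rdiv_lt_0_compat; lra. }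
  intros y [_ Hy].
  pose proof (Rmin_l (/ INR n) (eps / (2 * INR n + 1))).
  pose proof (Rmin_r (/ INR n) (eps / (2 * INR n + 1))).
  assert (Hd : 2 * INR n * Rabs (y - x) < eps).
  { apply Rle_lt_trans with ((2 * INR n + 1) * Rabs (y - x)).
    - pose proof (Rabs_pos (y - x)). nra.
    - apply Rlt_le_trans with ((2 * INR n + 1) * (eps / (2 * INR n + 1))).
      + apply Rmult_lt_compat_l; lra.
      + right. field. lra. }
  destruct (Rle_or_lt x y).
  - rewrite Rabs_right in Hy, Hd by lra.
    eapply Rle_lt_trans; [apply Hl|]; lra.
  - rewrite Rabs_left in Hy, Hd by lra.
    rewrite Rabs_minus_sym.
    eapply Rle_lt_trans; [apply Hl|]; lra.
Qed.

Lemma cont_px : continuity (fun t => fst (pt n t)).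
Proof.
  apply cont_gen. intros x y Hxy.
  apply (lip_gen (cth n) fst (cth_bd)); auto.
  intros k t Hk. rewrite (pt_on_edge n k t Hk). reflexivity.
Qed.

Lemma cont_py : continuity (fun t => snd (pt n t)).
Proof.
  apply cont_gen. intros x y Hxy.
  apply (lip_gen (sth n) snd (sth_bd)); auto.
  intros k t Hk. rewrite (pt_on_edge n k t Hk). reflexivity.
Qed.

Lemma cont_D a : continuity (fun x => D n a x).
Proof.
  intros x. unfold D, edist.
  set (h := fun x => (fst (pt n a) - fst (pt n x)) ^ 2 + (snd (pt n a) - snd (pt n x)) ^ 2).
  change (continuity_pt (comp sqrt h) x).
  apply continuity_pt_comp.
  - unfold h. 
    assert (Hx := cont_px x). assert (Hy := cont_py x).
    apply (continuity_pt_plus (fun x => (fst (pt n a) - fst (pt n x)) ^ 2) (fun x => (snd (pt n a) - snd (pt n x)) ^ 2)).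
    + apply (continuity_pt_mult (fun x => (fst (pt n a) - fst (pt n x))) (fun x => (fst (pt n a) - fst (pt n x)) ^ 1)).
      * apply (continuity_pt_minus (fun _ => fst (pt n a)) (fun x => fst (pt n x))); auto. apply continuity_pt_const. intros u v; auto.
      * apply (continuity_pt_mult (fun x => (fst (pt n a) - fst (pt n x))) (fun _ => 1)).
        apply (continuity_pt_minus (fun _ => fst (pt n a)) (fun x => fst (pt n x))); auto. apply continuity_pt_const. intros u v; auto.
        apply continuity_pt_const. intros u v; auto.
    + apply (continuity_pt_mult (fun x => (snd (pt n a) - snd (pt n x))) (fun x => (snd (pt n a) - snd (pt n x)) ^ 1)).
      * apply (continuity_pt_minus (fun _ => snd (pt n a)) (fun x => snd (pt n x))); auto. apply continuity_pt_const. intros u v; auto.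
      * apply (continuity_pt_mult (fun x => (snd (pt n a) - snd (pt n x))) (fun _ => 1)).
        apply (continuity_pt_minus (fun _ => snd (pt n a)) (fun x => snd (pt n x))); auto. apply continuity_pt_const. intros u v; auto.
        apply continuity_pt_const. intros u v; auto.
  - apply continuity_pt_sqrt. unfold h. apply Rplus_le_le_0_compat; apply pow2_ge_0.
Qed.

Lemma cont_Dshift a c : continuity (fun s => D n a (c + s)).
Proof.
  intros x. change (continuity_pt (comp (fun x => D n a x) (fun s => c + s)) x).
  apply continuity_pt_comp. 
  - apply (continuity_pt_plus (fun _ => c) (fun s => s)). apply continuity_pt_const. intros u v; auto.
    apply derivable_continuous_pt. apply derivable_pt_id.
  - apply cont_D.
Qed.

Lemma cont_eps (f : R -> R) x : continuity_pt f x -> forall eps, 0 < eps ->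
  exists del, 0 < del /\ forall y, Rabs (y - x) < del -> Rabs (f y - f x) < eps.
Proof.
  intros Hc eps He. unfold continuity_pt, continue_in, limit1_in, limit_in in Hc.
  destruct (Hc eps He) as [del [Hd H]]. exists del. split; auto.
  intros y Hy. destruct (Req_dec y x) as [->|Hne].
  - rewrite Rminus_diag, Rabs_R0. auto.
  - apply (H y). split. split; auto. exact I. simpl. unfold R_dist. auto.
Qed.

End C.


Section I.
Variable n : nat.
Hypothesis Hn : (6 <= n)%nat.

Lemma rot_inj p q : rot n p = rot n q -> p = q.
Proof.
  intros H. destruct p as [p1 p2], q as [q1 q2]. unfold rot in H; simpl in H.
  injection H as H1 H2. pose proof (ca_sa n).
  set (c := ca n) in *. set (s := sa n) in *.
  assert (E1 : p1 = (p1 * c - p2 * s) * c + (p1 * s + p2 * c) * s).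
  { transitivity (p1 * (c*c + s*s)). rewrite H; ring. ring. }
  assert (E2 : p2 = - (p1 * c - p2 * s) * s + (p1 * s + p2 * c) * c).
  { transitivity (p2 * (c*c + s*s)). rewrite H; ring. ring. }
  assert (E3 : q1 = (q1 * c - q2 * s) * c + (q1 * s + q2 * c) * s).
  { transitivity (q1 * (c*c + s*s)). rewrite H; ring. ring. }
  assert (E4 : q2 = - (q1 * c - q2 * s) * s + (q1 * s + q2 * c) * c).
  { transitivity (q2 * (c*c + s*s)). rewrite H; ring. ring. }
  f_equal.
  - rewrite E1 at 1. rewrite H1, H2. auto.
  - rewrite E2 at 1. rewrite H1, H2. auto.
Qed.

Lemma pt_shift_back a b (m : nat) :
  pt n (a + INR m / INR n) = pt n (b + INR m / INR n) -> pt n a = pt n b.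
Proof.
  pose proof (NNpos n Hn).
  induction m as [|m IH]; intros H0.
  - simpl in H0. unfold Rdiv in H0. rewrite Rmult_0_l, !Rplus_0_r in H0. auto.
  - apply IH. apply rot_inj. rewrite <- !pt_shift by auto.
    rewrite S_INR in H0.
    replace (a + INR m / INR n + / INR n) with (a + (INR m + 1) / INR n) by (field; lra).
    replace (b + INR m / INR n + / INR n) with (b + (INR m + 1) / INR n) by (field; lra).
    auto.
Qed.

Lemma cos_odd_lt (i : nat) : (1 < i < 2 * n - 1)%nat -> cos (INR i * PI / INR n) < cos (PI / INR n).
Proof.
  intros Hi. pose proof (NNpos n Hn). pose proof PI_RGT_0 as HP.
  assert (Hi1 : 1 < INR i) by (apply lt_1_INR; lia).
  assert (Hnr : 6 <= INR n) by (replace 6 with (INR 6) by (simpl; ring); apply le_INR; lia).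
  assert (A1 : 0 <= PI / INR n) by (apply Rlt_le, Rdiv_lt_0_compat; lra).
  assert (A2 : PI / INR n <= PI).
  { apply (Rmult_le_reg_r (INR n)); auto. unfold Rdiv. rewrite Rmult_assoc, Rinv_l by lra. nra. }
  destruct (le_lt_dec i n) as [Hle|Hgt].
  - apply cos_decreasing_1; auto.
    + apply Rlt_le, Rdiv_lt_0_compat; nra.
    + apply (Rmult_le_reg_r (INR n)); auto. unfold Rdiv. rewrite Rmult_assoc, Rinv_l by lra.
      rewrite Rmult_1_r. assert (INR i <= INR n) by (apply le_INR; auto). nra.
    + unfold Rdiv. apply Rmult_lt_compat_r. apply Rinv_0_lt_compat; lra. nra.
  - assert (E : cos (INR i * PI / INR n) = cos (INR (2 * n - i) * PI / INR n)).
    { rewrite minus_INR by lia. rewrite mult_INR. simpl INR.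
      replace (((1 + 1) * INR n - INR i) * PI / INR n) with (- (INR i * PI / INR n) + 2 * INR 1 * PI).
      rewrite cos_period, cos_neg. auto. simpl. field. lra. }
    rewrite E.
    assert (Hj : (1 < 2 * n - i <= n)%nat) by lia.
    assert (Hj1 : 1 < INR (2 * n - i)) by (apply lt_1_INR; lia).
    apply cos_decreasing_1; auto.
    + apply Rlt_le, Rdiv_lt_0_compat; nra.
    + apply (Rmult_le_reg_r (INR n)); auto. unfold Rdiv. rewrite Rmult_assoc, Rinv_l by lra.
      rewrite Rmult_1_r. assert (INR (2 * n - i) <= INR n) by (apply le_INR; lia). nra.
    + unfold Rdiv. apply Rmult_lt_compat_r. apply Rinv_0_lt_compat; lra. nra.
Qed.

Lemma cos_top : cos (INR (2 * n - 1) * PI / INR n) = cos (PI / INR n).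
Proof.
  pose proof (NNpos n Hn).
  rewrite minus_INR by lia. rewrite mult_INR. simpl INR.
  replace (((1 + 1) * INR n - 1) * PI / INR n) with (- (PI / INR n) + 2 * INR 1 * PI).
  rewrite cos_period, cos_neg. auto. simpl. field. lra.
Qed.

Definition phi (p : R * R) := fst p * cos (PI / INR n) + snd p * sin (PI / INR n).

Lemma phi_V (j : R) : cth n j * cos (PI / INR n) + sth n j * sin (PI / INR n) = cos ((2 * j - 1) * PI / INR n).
Proof.
  pose proof (NNpos n Hn).
  unfold cth, sth. rewrite <- cos_minus. f_equal. field. lra.
Qed.

Lemma sth1_pos : 0 < sth n 1.
Proof.
  pose proof (NNpos n Hn). pose proof PI_RGT_0.
  assert (Hnr : 6 <= INR n) by (replace 6 with (INR 6) by (simpl; ring); apply le_INR; lia).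
  unfold sth. apply sin_gt_0.
  - apply Rdiv_lt_0_compat; lra.
  - apply (Rmult_lt_reg_r (INR n)); auto. unfold Rdiv. rewrite Rmult_assoc, Rinv_l by lra. nra.
Qed.

Lemma cth0 : cth n 0 = 1.
Proof. unfold cth. rewrite Rmult_0_r. unfold Rdiv. rewrite Rmult_0_l. apply cos_0. Qed.
Lemma sth0 : sth n 0 = 0.
Proof. unfold sth. rewrite Rmult_0_r. unfold Rdiv. rewrite Rmult_0_l. apply sin_0. Qed.

Lemma pt_inj_core x y : 0 <= INR n * x < 1 -> 0 <= y < 1 -> pt n x = pt n y -> x = y.
Proof.
  intros Hx Hy Heq. pose proof (NNpos n Hn) as HN.
  set (k := floorR (INR n * y)).
  pose proof (floor_spec (INR n * y)) as Hk. fold k in Hk.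
  assert (HNy : INR n * y < INR n) by nra.
  assert (Hk0 : (0 <= k)%Z).
  { assert (Hm : -1 < IZR k) by nra. apply lt_IZR in Hm. lia. }
  assert (Hkn : (k < Z.of_nat n)%Z) by (apply lt_IZR; rewrite <- INR_IZR_INZ; lra).
  rewrite (pt_on_edge n 0 x) in Heq by (simpl; lra).
  rewrite (pt_on_edge n k y) in Heq by lra.
  simpl IZR in Heq. rewrite Rplus_0_l, Rminus_0_r in Heq.
  rewrite cth0, sth0 in Heq.
  set (s := INR n * x) in *. set (s' := INR n * y - IZR k) in *.
  assert (Hs' : 0 <= s' < 1) by (unfold s'; lra).
  destruct (Z.eq_dec k 0) as [Ek|Nk].
  - rewrite Ek in *. simpl IZR in *. rewrite Rplus_0_l, cth0, sth0 in Heq.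
    injection Heq as E1 E2. pose proof sth1_pos.
    assert (Hss : s = s') by (apply (Rmult_eq_reg_r (sth n 1)); lra).
    unfold s, s' in Hss. rewrite Ek in Hss. simpl in Hss.
    apply (Rmult_eq_reg_l (INR n)); lra.
  - exfalso.
    assert (Ephi := f_equal phi Heq). unfold phi in Ephi; simpl in Ephi.
    set (c1 := cos (PI / INR n)) in *.
    assert (L : ((1 - s) * 1 + s * cth n 1) * c1 + ((1 - s) * 0 + s * sth n 1) * sin (PI / INR n)
                = (1 - s) * (1 * c1 + 0 * sin (PI / INR n)) + s * (cth n 1 * c1 + sth n 1 * sin (PI / INR n))) by ring.
    rewrite L in Ephi. clear L.
    replace (1 * c1 + 0 * sin (PI / INR n)) with (cth n 0 * c1 + sth n 0 * sin (PI / INR n)) in Ephi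
      by (rewrite cth0, sth0; ring).
    rewrite !phi_V in Ephi.
    replace ((2 * 0 - 1) * PI / INR n) with (- (PI / INR n)) in Ephi by (field; lra).
    replace ((2 * 1 - 1) * PI / INR n) with (PI / INR n) in Ephi by (field; lra).
    rewrite cos_neg in Ephi. fold c1 in Ephi.
    match type of Ephi with _ = ?R => 
      assert (L2 : R = (1 - s') * (cth n (IZR k) * c1 + sth n (IZR k) * sin (PI / INR n)) + s' * (cth n (IZR k + 1) * c1 + sth n (IZR k + 1) * sin (PI / INR n))) by ring end.
    rewrite L2, !phi_V in Ephi. clear L2.
    replace ((2 * IZR k - 1) * PI / INR n) with (INR (Z.to_nat (2 * k - 1)) * PI / INR n) in Ephi
      by (rewrite INR_IZR_INZ, Z2Nat.id by lia; rewrite minus_IZR, mult_IZR; reflexivity).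
    replace ((2 * (IZR k + 1) - 1) * PI / INR n) with (INR (Z.to_nat (2 * k + 1)) * PI / INR n) in Ephi
      by (rewrite INR_IZR_INZ, Z2Nat.id by lia; rewrite plus_IZR, mult_IZR; f_equal; f_equal; ring).
    set (A := cos (INR (Z.to_nat (2 * k - 1)) * PI / INR n)) in *.
    set (B := cos (INR (Z.to_nat (2 * k + 1)) * PI / INR n)) in *.
    assert (HB : B <= c1).
    { unfold B. destruct (Z.eq_dec k (Z.of_nat n - 1)) as [Ekn|Nkn].
      - replace (Z.to_nat (2 * k + 1)) with (2 * n - 1)%nat by lia. rewrite cos_top. unfold c1; lra.
      - apply Rlt_le, cos_odd_lt. lia. }
    assert (HA : A <= c1).
    { unfold A. destruct (Z.eq_dec k 1) as [Ek1|Nk1].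
      - replace (Z.to_nat (2 * k - 1)) with 1%nat by lia. simpl INR. rewrite Rmult_1_l. unfold c1; lra.
      - apply Rlt_le, cos_odd_lt. lia. }
    destruct (Z.eq_dec k 1) as [Ek1|Nk1].
    + assert (HB' : B < c1) by (unfold B; apply cos_odd_lt; lia).
      replace A with c1 in Ephi by (unfold A; replace (Z.to_nat (2 * k - 1)) with 1%nat by lia; simpl INR; rewrite Rmult_1_l; reflexivity).
      assert (s' = 0) by nra.
      rewrite H in Heq. rewrite Ek1 in Heq. simpl IZR in Heq.
      injection Heq as E1 E2. pose proof sth1_pos.
      assert (s = 1) by nra. lra.
    + assert (HA' : A < c1) by (unfold A; apply cos_odd_lt; lia).
      nra.
Qed.

Lemma pt_inj x y : 0 <= x < 1 -> 0 <= y < 1 -> pt n x = pt n y -> x = y.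
Proof.
  intros Hx Hy Heq. pose proof (NNpos n Hn) as HN.
  set (k := floorR (INR n * x)).
  pose proof (floor_spec (INR n * x)) as Hk. fold k in Hk.
  assert (Hk0 : (0 <= k)%Z).
  { assert (Hm : -1 < IZR k) by nra. apply lt_IZR in Hm. lia. }
  set (m := Z.to_nat k).
  assert (Em : INR m = IZR k) by (unfold m; rewrite INR_IZR_INZ, Z2Nat.id; auto).
  assert (H1 : pt n (x - INR m / INR n) = pt n (frac (y - INR m / INR n))).
  { rewrite pt_frac by auto. apply (pt_shift_back _ _ m).
    replace (x - INR m / INR n + INR m / INR n) with x by ring.
    replace (y - INR m / INR n + INR m / INR n) with y by ring. auto. }
  apply pt_inj_core in H1.
  - destruct (frac_int_diff (y - INR m / INR n)) as [z Hz].
    rewrite <- H1 in Hz.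
    assert (z = 0%Z) by (apply int_lt1; lra). subst z. simpl in Hz. lra.
  - rewrite Rmult_minus_distr_l. replace (INR n * (INR m / INR n)) with (IZR k) by (rewrite Em; field; lra). lra.
  - apply frac_range.
Qed.

End I.


Lemma frac_diff a b : frac (frac b - frac a) = frac (b - a).
Proof.
  unfold frac at 2 3.
  replace (b - IZR (floorR b) - (a - IZR (floorR a))) with ((b - a) + IZR (floorR a - floorR b)) by (rewrite minus_IZR; ring).
  apply frac_add_int.
Qed.

Lemma frac_neg_small d : 0 < d < 1 -> frac (- d) = 1 - d.
Proof.
  intros H. replace (- d) with ((1 - d) + IZR (-1)) by (simpl; ring).
  rewrite frac_add_int. apply frac_id. lra.
Qed.

Section G.
Variable n : nat.
Hypothesis Hn : (6 <= n)%nat.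
Variable r : R.
Hypothesis Hr : 0 < r.

Definition H (a s : R) := 0 < s < 1 /\ D n a (a + s) = r /\ forall s', 0 < s' < s -> D n a (a + s') <> r.

Lemma cyc_lift : vr_cyclic n r -> forall x y z, 0 < y - x <= 1/2 -> D n x y < r -> 0 < z - x < y - x ->
  D n x z < r /\ D n z y < r.
Proof.
  intros Hc x y z H1 H2 H3.
  assert (Eab : dP (frac x) (frac y) = y - x) by (unfold dP; rewrite frac_diff; apply frac_id; lra).
  assert (Eba : dP (frac y) (frac x) = 1 - (y - x)).
  { unfold dP. rewrite frac_diff. replace (x - y) with (- (y - x)) by ring. apply frac_neg_small. lra. }
  assert (Eac : dP (frac x) (frac z) = z - x) by (unfold dP; rewrite frac_diff; apply frac_id; lra).
  assert (He : vr_edge n r (frac x) (frac y)).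
  { unfold vr_edge, inP. pose proof (frac_range x). pose proof (frac_range y).
    split; [lra|]. split; [lra|]. split; [|split].
    - intros E. unfold dP in Eab. rewrite E, Rminus_diag in Eab. rewrite frac_id in Eab; lra.
    - unfold edist. rewrite !pt_frac by auto. exact H2.
    - rewrite Eab, Eba. lra. }
  destruct (Hc _ _ (frac z) He) as [E1 E2].
  - unfold inP. apply frac_range.
  - rewrite Eac, Eab. lra.
  - destruct E1 as [_ [_ [_ [E1 _]]]]. destruct E2 as [_ [_ [_ [E2 _]]]].
    unfold D, edist. unfold edist in E1, E2. rewrite !pt_frac in E1, E2 by auto. auto.
Qed.

Lemma H_below a s : H a s -> forall s', 0 < s' < s -> D n a (a + s') < r.
Proof.
  intros [Hs [HD Hf]] s' Hs'.
  destruct (Rlt_or_le (D n a (a + s')) r) as [L|L]; auto.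
  exfalso. assert (L' : r < D n a (a + s')) by (destruct L; auto; exfalso; apply (Hf s'); auto).
  assert (Hcont : continuity (fun t => D n a (a + t) - r)).
  { intros t. apply (continuity_pt_minus (fun t => D n a (a + t)) (fun _ => r)).
    apply cont_Dshift; auto. apply continuity_pt_const. intros u v; auto. }
  destruct (IVT (fun t => D n a (a + t) - r) 0 s' Hcont) as [z [Hz1 Hz2]].
  - lra.
  - rewrite Rplus_0_r, D_self. lra.
  - lra.
  - destruct (Req_dec z 0) as [->|Hz0].
    + rewrite Rplus_0_r, D_self in Hz2. lra.
    + apply (Hf z). lra. lra.
Qed.

Lemma H_half : vr_cyclic n r -> forall a s, H a s -> s <= 1/2.
Proof.
  intros Hc a s Hs. destruct (Rle_or_lt s (1/2)) as [L|L]; auto. exfalso.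
  pose proof Hs as [Hs1 [HD Hf]].
  set (c := a + (s + 1/2)/2).
  assert (Hac : D n a c < r) by (apply (H_below a s Hs); lra).
  destruct (cyc_lift Hc c (a + 1) (a + s)) as [_ E].
  - unfold c. lra.
  - rewrite D_sym. replace (a + 1) with (a + IZR 1) by (simpl; ring). rewrite D_intl by auto. auto.
  - unfold c; lra.
  - rewrite D_sym in E. replace (a + 1) with (a + IZR 1) in E by (simpl; ring). rewrite D_intl in E by auto. lra.
Qed.

Lemma H_back_le : vr_cyclic n r -> forall a s x, H a s -> a < x < a + s -> D n x (a + s) <= r.
Proof.
  intros Hc a s x Hs Hx. pose proof (H_half Hc a s Hs) as Hh.
  destruct (Rle_or_lt (D n x (a + s)) r) as [L|L]; auto. exfalso.
  destruct (cont_eps (fun t => D n x (x + t)) (a + s - x) (cont_Dshift n Hn x x (a + s - x)) (D n x (a + s) - r)) as [del [Hdel Hd]].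
  { lra. }
  set (e := Rmin (del / 2) ((a + s - x) / 2)).
  assert (He : 0 < e) by (apply Rmin_pos; lra).
  assert (He1 : e <= del / 2) by apply Rmin_l.
  assert (He2 : e <= (a + s - x) / 2) by apply Rmin_r.
  specialize (Hd (a + s - x - e)).
  replace (x + (a + s - x)) with (a + s) in Hd by ring.
  assert (Hd' : Rabs (D n x (x + (a + s - x - e)) - D n x (a + s)) < D n x (a + s) - r).
  { apply Hd. replace (a + s - x - e - (a + s - x)) with (- e) by ring. rewrite Rabs_Ropp, Rabs_right; lra. }
  replace (x + (a + s - x - e)) with (a + (s - e)) in Hd' by ring.
  destruct (cyc_lift Hc a (a + (s - e)) x) as [_ E].
  - lra.
  - apply (H_below a s Hs). lra.
  - lra.
  - apply Rabs_def2 in Hd'. lra.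
Qed.

Lemma quad3 px py qx qy bx by_ t1 t2 t3 R2 :
  t1 < t2 < t3 ->
  (px + t1 * (qx - px) - bx) ^ 2 + (py + t1 * (qy - py) - by_) ^ 2 = R2 ->
  (px + t2 * (qx - px) - bx) ^ 2 + (py + t2 * (qy - py) - by_) ^ 2 = R2 ->
  (px + t3 * (qx - px) - bx) ^ 2 + (py + t3 * (qy - py) - by_) ^ 2 = R2 ->
  (qx - px) ^ 2 + (qy - py) ^ 2 = 0.
Proof.
  intros Ht E1 E2 E3.
  set (A := (qx - px) ^ 2 + (qy - py) ^ 2).
  set (Bc := 2 * ((qx - px) * (px - bx) + (qy - py) * (py - by_))).
  assert (F1 : (t2 - t1) * (A * (t1 + t2) + Bc) = 0) by (unfold A, Bc; rewrite <- E2 in E1; nra).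
  assert (F2 : (t3 - t2) * (A * (t2 + t3) + Bc) = 0) by (unfold A, Bc; rewrite <- E3 in E2; nra).
  apply Rmult_integral in F1. apply Rmult_integral in F2.
  destruct F1 as [F1|F1]; [lra|]. destruct F2 as [F2|F2]; [lra|].
  assert (A * (t3 - t1) = 0) by lra.
  apply Rmult_integral in H0. destruct H0; lra.
Qed.

Lemma edist_sq p q d : edist p q = d -> (fst p - fst q) ^ 2 + (snd p - snd q) ^ 2 = d ^ 2.
Proof.
  unfold edist. intros E. rewrite <- E. rewrite pow2_sqrt. auto.
  apply Rplus_le_le_0_compat; apply pow2_ge_0.
Qed.

Lemma edge_len_pos k : (cth n (k + 1) - cth n k) ^ 2 + (sth n (k + 1) - sth n k) ^ 2 > 0.
Proof.
  pose proof (NNpos n Hn). pose proof PI_RGT_0.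
  assert (Hnr : 6 <= INR n) by (replace 6 with (INR 6) by (simpl; ring); apply le_INR; lia).
  assert (E : (cth n (k + 1) - cth n k) ^ 2 + (sth n (k + 1) - sth n k) ^ 2 = 2 - 2 * cos (2 * PI / INR n)).
  { rewrite (cth_succ n Hn), (sth_succ n Hn). unfold cth, sth, ca, sa.
    pose proof (sin2_cos2 (2 * PI * k / INR n)) as S1. pose proof (sin2_cos2 (2 * PI / INR n)) as S2.
    unfold Rsqr in *. 
    set (c := cos (2 * PI * k / INR n)) in *. set (s := sin (2 * PI * k / INR n)) in *.
    set (c' := cos (2 * PI / INR n)) in *. set (s' := sin (2 * PI / INR n)) in *.
    transitivity ((c*c + s*s) * (c' * c' + s' * s' - 2 * c' + 1)); [ring|].
    rewrite Rplus_comm in S1. rewrite S1. rewrite Rplus_comm in S2. rewrite S2. ring. }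
  rewrite E.
  assert (C0 : cos (2 * PI / INR n) < cos 0).
  { apply cos_decreasing_1; try lra.
    - apply Rlt_le, Rdiv_lt_0_compat; lra.
    - apply (Rmult_le_reg_r (INR n)); auto. unfold Rdiv. rewrite Rmult_assoc, Rinv_l by lra. nra.
    - apply Rdiv_lt_0_compat; lra. }
  rewrite cos_0 in C0. lra.
Qed.

Lemma H_back : vr_cyclic n r -> forall a s x, H a s -> a < x < a + s -> D n x (a + s) < r.
Proof.
  intros Hc a s x Hs Hx. pose proof (H_half Hc a s Hs) as Hh.
  destruct (Rle_lt_or_eq_dec _ _ (H_back_le Hc a s x Hs Hx)) as [L|L]; auto. exfalso.
  assert (Ex : exists c, a < c < x /\ D n c (a + s) < r).
  { apply Classical_Prop.NNPP. intros Hno.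
    assert (All : forall c, a < c < x -> D n c (a + s) = r).
    { intros c Hc'. destruct (Rle_lt_or_eq_dec _ _ (H_back_le Hc a s c Hs ltac:(lra))) as [L'|L']; auto.
      exfalso. apply Hno. exists c. split; auto. }
    pose proof (NNpos n Hn) as HN.
    set (y1 := (a + x) / 2).
    set (k := floorR (INR n * y1)).
    pose proof (floor_spec (INR n * y1)) as Hk. fold k in Hk.
    set (e := Rmin (x - y1) ((IZR k + 1) / INR n - y1)).
    assert (Hk2 : y1 < (IZR k + 1) / INR n).
    { apply (Rmult_lt_reg_l (INR n)); auto. replace (INR n * ((IZR k + 1) / INR n)) with (IZR k + 1) by (field; lra). lra. }
    assert (He : 0 < e) by (apply Rmin_pos; unfold y1 in *; lra).
    assert (He1 : e <= x - y1) by apply Rmin_l.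
    assert (He2 : e <= (IZR k + 1) / INR n - y1) by apply Rmin_r.
    assert (Hin : forall y, y1 <= y <= y1 + e -> IZR k <= INR n * y <= IZR k + 1).
    { intros y Hy. split.
      - apply Rle_trans with (INR n * y1); [lra|]. apply Rmult_le_compat_l; lra.
      - replace (IZR k + 1) with (INR n * ((IZR k + 1) / INR n)) by (field; lra). apply Rmult_le_compat_l; lra. }
    assert (Hq : forall y, y1 <= y <= y1 + e / 2 ->
       (cth n (IZR k) + (INR n * y - IZR k) * (cth n (IZR k + 1) - cth n (IZR k)) - fst (pt n (a + s))) ^ 2 +
       (sth n (IZR k) + (INR n * y - IZR k) * (sth n (IZR k + 1) - sth n (IZR k)) - snd (pt n (a + s))) ^ 2 = r ^ 2).
    { intros y Hy. assert (Ey : D n y (a + s) = r) by (apply All; unfold y1 in *; lra).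
      apply edist_sq in Ey. rewrite (pt_on_edge n k y (Hin y ltac:(lra))) in Ey. cbn [fst snd] in Ey. rewrite <- Ey. f_equal; f_equal; ring. }
    assert (Q := quad3 _ _ _ _ _ _ (INR n * y1 - IZR k) (INR n * (y1 + e/4) - IZR k) (INR n * (y1 + e/2) - IZR k) _
      ltac:(split; nra) (Hq y1 ltac:(lra)) (Hq (y1 + e/4) ltac:(lra)) (Hq (y1 + e/2) ltac:(lra))).
    pose proof (edge_len_pos (IZR k)). lra. }
  destruct Ex as [c [Hc1 Hc2]].
  destruct (cyc_lift Hc c (a + s) x) as [_ E]; try lra.
Qed.

Lemma H_unique a s s' : H a s -> H a s' -> s = s'.
Proof.
  intros [H1 [H2 H3]] [H1' [H2' H3']].
  destruct (Rtotal_order s s') as [L|[L|L]]; auto.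
  - exfalso. apply (H3' s); auto. lra.
  - exfalso. apply (H3 s'); auto. lra.
Qed.

Lemma H_mono : vr_cyclic n r -> forall a s a' s', H a s -> H a' s' -> a < a' -> a + s <= a' + s'.
Proof.
  intros Hc a s a' s' Hs Hs' Ha.
  pose proof Hs' as [H1' [H2' H3']].
  destruct (Rle_or_lt (a + s) a') as [L|L]; [lra|].
  destruct (Rle_or_lt (a + s) (a' + s')) as [L2|L2]; auto. exfalso.
  pose proof (H_half Hc a s Hs).
  assert (Hb : D n a' (a + s) < r) by (apply (H_back Hc a s a' Hs); lra).
  destruct (cyc_lift Hc a' (a + s) (a' + s')) as [E _]; try lra.
Qed.

Lemma H_shift a s (j : Z) : H a s -> H (a + IZR j / INR n) s.
Proof.
  intros [H1 [H2 H3]]. split; auto. split.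
  - replace (a + IZR j / INR n + s) with ((a + s) + IZR j / INR n) by ring. rewrite D_shiftZ by auto; auto.
  - intros s' Hs'. replace (a + IZR j / INR n + s') with ((a + s') + IZR j / INR n) by ring. rewrite D_shiftZ by auto; auto.
Qed.

Lemma H_int a s (z : Z) : H a s -> H (a + IZR z) s.
Proof.
  intros [H1 [H2 H3]]. split; auto. split.
  - replace (a + IZR z + s) with ((a + s) + IZR z) by ring. rewrite D_intl, D_intr by auto; auto.
  - intros s' Hs'. replace (a + IZR z + s') with ((a + s') + IZR z) by ring. rewrite D_intl, D_intr by auto; auto.
Qed.

Lemma H_refl : vr_cyclic n r -> forall a s (j : Z), H a s -> H (IZR j / INR n - a - s) s.
Proof.
  intros Hc a s j Hs. pose proof Hs as [H1 [H2 H3]]. split; auto. split.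
  - replace (IZR j / INR n - a - s + s) with (IZR j / INR n - a) by ring.
    replace (IZR j / INR n - a - s) with (IZR j / INR n - (a + s)) by ring.
    rewrite D_refl by auto. rewrite D_sym. auto.
  - intros s' Hs'.
    replace (IZR j / INR n - a - s + s') with (IZR j / INR n - (a + s - s')) by ring.
    replace (IZR j / INR n - a - s) with (IZR j / INR n - (a + s)) by ring.
    rewrite D_refl by auto. rewrite D_sym.
    assert (D n (a + s - s') (a + s) < r) by (apply (H_back Hc a s); auto; lra). lra.
Qed.

End G.


Section L.
Variable n : nat.
Hypothesis Hn : (6 <= n)%nat.

Lemma cyc_lt rn r : is_lub (rn_set n) rn -> 0 < r -> r < rn -> vr_cyclic n r.
Proof.
  intros [Hub Hl] Hr Hrr.
  destruct (Classical_Prop.classic (exists r0, rn_set n r0 /\ r < r0)) as [[r0 [[_ Hr0] L]]|Hno].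
  - apply Hr0. lra.
  - exfalso. assert (rn <= r); [|lra]. apply Hl. intros r0 Hr0.
    destruct (Rle_or_lt r0 r); auto. exfalso. apply Hno. exists r0. auto.
Qed.

Lemma cyc_all rn r : is_lub (rn_set n) rn -> 0 < r -> r <= rn -> vr_cyclic n r.
Proof.
  intros Hl Hr Hrr. destruct (Rle_lt_or_eq_dec _ _ Hrr) as [L|E]; [apply (cyc_lt rn); auto|].
  subst r. intros a b c He Hc Hd.
  pose proof He as [Ha [Hb [Hab [Hdist Hdir]]]].
  set (r' := (edist (pt n a) (pt n b) + rn) / 2).
  assert (Hpos : 0 <= edist (pt n a) (pt n b)) by (unfold edist; apply sqrt_pos).
  assert (Hc' : vr_cyclic n r') by (apply (cyc_lt rn); auto; unfold r'; lra).
  assert (He' : vr_edge n r' a b) by (split; [auto|split; [auto|split; [auto|split; [unfold r'; lra|auto]]]]).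
  destruct (Hc' a b c He' Hc Hd) as [[E1 [E2 [E3 [E4 E5]]]] [F1 [F2 [F3 [F4 F5]]]]].
  split; (split; [auto|split; [auto|split; [auto|split; [unfold r' in *; lra|auto]]]]).
Qed.

Lemma is_g_H r a b : is_g n r a b -> exists s, H n r a s /\ b = frac (a + s).
Proof.
  intros [Ha [Hb [s [Hs [Eb [Ed Hf]]]]]]. exists s. split; auto. split; auto.
Qed.

Lemma mono_r a r1 r2 s1 s2 : 0 < r1 -> r1 < r2 -> H n r1 a s1 -> H n r2 a s2 -> s1 < s2.
Proof.
  intros H0 Hlt H1 H2. pose proof H2 as [A2 [B2 C2]]. pose proof H1 as [A1 [B1 C1]].
  destruct (Rtotal_order s1 s2) as [L|[L|L]]; auto; exfalso.
  - subst. lra.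
  - assert (D n a (a + s2) < r1) by (apply (H_below n Hn r1 H0 a s1 H1); lra). lra.
Qed.

Lemma glim_isg rn a b : 0 < rn -> g_lim n rn a b -> is_g n rn a b.
Proof.
  intros Hrn [Ha [Hb Hg]].
  destruct (Hg 1 ltac:(lra)) as [d0 [Hd0 Hex]].
  set (d1 := Rmin d0 rn).
  assert (Hd1 : 0 < d1) by (apply Rmin_pos; lra).
  assert (Hd1a : d1 <= d0) by apply Rmin_l. assert (Hd1b : d1 <= rn) by apply Rmin_r.
  assert (Ex : forall r, rn - d1 < r < rn -> exists s, H n r a s).
  { intros r Hr. destruct (proj1 (Hex r ltac:(lra))) as [c Hc]. destruct (is_g_H r a c Hc) as [s [Hs _]]. eauto. }
  set (E := fun s => exists r, rn - d1 < r < rn /\ H n r a s).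
  assert (HE1 : bound E).
  { exists 1. intros s [r [_ [Hs _]]]. lra. }
  assert (HE2 : exists s, E s).
  { destruct (Ex (rn - d1/2) ltac:(lra)) as [s Hs]. exists s. exists (rn - d1/2). split; auto. lra. }
  destruct (completeness E HE1 HE2) as [ss [Hub Hlub]].
  assert (Hss1 : ss <= 1) by (apply Hlub; intros s [r [_ [Hs _]]]; lra).
  assert (Hss0 : 0 < ss).
  { destruct HE2 as [s0 Hs0]. pose proof (Hub s0 Hs0). destruct Hs0 as [r [_ [Hs _]]]. lra. }
  assert (Approx : forall eta del, 0 < eta -> 0 < del -> exists r3 s3,
            rn - Rmin del d1 < r3 < rn /\ H n r3 a s3 /\ ss - eta < s3 <= ss).
  { intros eta del Heta Hdel.
    destruct (Classical_Prop.classic (exists s2, E s2 /\ ss - eta < s2)) as [[s2 [[r2 [Hr2 Hs2]] Hlt]]|Hno].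
    - set (r3 := Rmax r2 (rn - Rmin del d1 / 2)).
      assert (Hm1 : 0 < Rmin del d1) by (apply Rmin_pos; lra).
      assert (Hm2 : Rmin del d1 <= d1) by apply Rmin_r.
      assert (Hr3 : rn - Rmin del d1 < r3 < rn).
      { unfold r3. split. eapply Rlt_le_trans; [|apply Rmax_r]. lra.
        apply Rmax_lub_lt; lra. }
      destruct (Ex r3 ltac:(lra)) as [s3 Hs3]. exists r3, s3. split; auto. split; auto.
      split.
      + assert (s2 <= s3).
        { destruct (Rle_lt_or_eq_dec r2 r3 (Rmax_l _ _)) as [L|L].
          - apply Rlt_le. apply (mono_r a r2 r3); auto; lra.
          - rewrite <- L in Hs3. right. apply (H_unique n r2 a); auto. }
        lra.
      + apply Hub. exists r3. split; auto. lra.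
    - exfalso. assert (ss <= ss - eta); [|lra]. apply Hlub. intros s Hs.
      destruct (Rle_or_lt s (ss - eta)); auto. exfalso. apply Hno. eauto. }
  assert (Below : forall s', 0 < s' < ss -> D n a (a + s') < rn).
  { intros s' Hs'. destruct (Approx (ss - s') 1 ltac:(lra) ltac:(lra)) as [r3 [s3 [Hr3 [Hs3 Hb3]]]].
    assert (Hr3p : 0 < r3).
    { pose proof (Rmin_r 1 d1). lra. }
    assert (D n a (a + s') < r3) by (apply (H_below n Hn r3 Hr3p a s3 Hs3); lra). lra. }
  assert (Hcont := cont_Dshift n Hn a a ss).
  assert (Hval : D n a (a + ss) = rn).
  { destruct (Rtotal_order (D n a (a + ss)) rn) as [L|[L|L]]; auto; exfalso.
    - set (rm := (D n a (a + ss) + rn) / 2).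
      destruct (cont_eps _ _ Hcont (rm - D n a (a + ss)) ltac:(unfold rm; lra)) as [eta [Heta Hc]].
      destruct (Approx eta (rn - rm) Heta ltac:(unfold rm; lra)) as [r3 [s3 [Hr3 [Hs3 Hb3]]]].
      pose proof (Rmin_l (rn - rm) d1).
      assert (Hd : Rabs (D n a (a + s3) - D n a (a + ss)) < rm - D n a (a + ss)).
      { apply Hc. rewrite Rabs_left1; lra. }
      destruct Hs3 as [_ [Hv _]]. rewrite Hv in Hd. apply Rabs_def2 in Hd. lra.
    - destruct (cont_eps _ _ Hcont (D n a (a + ss) - rn) ltac:(lra)) as [eta [Heta Hc]].
      set (t := ss - Rmin eta ss / 2).
      assert (0 < Rmin eta ss) by (apply Rmin_pos; lra).
      pose proof (Rmin_l eta ss). pose proof (Rmin_r eta ss).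
      assert (Hd : Rabs (D n a (a + t) - D n a (a + ss)) < D n a (a + ss) - rn).
      { apply Hc. unfold t. rewrite Rabs_left1; lra. }
      assert (D n a (a + t) < rn) by (apply Below; unfold t; lra).
      apply Rabs_def2 in Hd. lra. }
  assert (Hss1' : ss < 1).
  { destruct (Rle_lt_or_eq_dec _ _ Hss1) as [L|L]; auto. exfalso. rewrite L in Hval.
    replace (a + 1) with (a + IZR 1) in Hval by (simpl; ring). rewrite D_intr, D_self in Hval by auto. lra. }
  assert (Hstar : H n rn a ss).
  { split; [lra|]. split; auto. intros s' Hs'. pose proof (Below s' Hs'). lra. }
  assert (Hpt : pt n b = pt n (a + ss)).
  { assert (Coord : forall (sel : R * R -> R), continuity (fun t => sel (pt n t)) ->
        (forall p q, Rabs (sel p - sel q) <= edist p q) -> sel (pt n b) = sel (pt n (a + ss))).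
    { intros sel Hsel Hle.
      destruct (Req_dec (sel (pt n b)) (sel (pt n (a + ss)))) as [E0|Ne]; auto. exfalso.
      set (e0 := Rabs (sel (pt n b) - sel (pt n (a + ss)))).
      assert (He0 : 0 < e0) by (apply Rabs_pos_lt; lra).
      destruct (cont_eps _ _ (Hsel (a + ss)) (e0 / 2) ltac:(lra)) as [eta [Heta Hc]].
      destruct (Hg (e0 / 2) ltac:(lra)) as [del [Hdel Hgg]].
      destruct (Approx eta del Heta Hdel) as [r3 [s3 [Hr3 [Hs3 Hb3]]]].
      pose proof (Rmin_l del d1).
      assert (Hisg : is_g n r3 a (frac (a + s3))).
      { destruct Hs3 as [A [B C]]. split; auto. split; [apply frac_range|]. exists s3. auto. }
      pose proof (proj2 (Hgg r3 ltac:(lra)) _ Hisg) as Hclose.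
      rewrite pt_frac in Hclose by auto.
      pose proof (Hle (pt n (a + s3)) (pt n b)) as Hl1.
      assert (Hl2 : Rabs (sel (pt n (a + s3)) - sel (pt n (a + ss))) < e0 / 2).
      { apply Hc. rewrite Rabs_left1; lra. }
      assert (Tri : Rabs (sel (pt n b) - sel (pt n (a + ss))) <=
              Rabs (sel (pt n (a + s3)) - sel (pt n b)) + Rabs (sel (pt n (a + s3)) - sel (pt n (a + ss)))).
      { replace (sel (pt n b) - sel (pt n (a + ss))) with
          (- (sel (pt n (a + s3)) - sel (pt n b)) + (sel (pt n (a + s3)) - sel (pt n (a + ss)))) by ring.
        eapply Rle_trans; [apply Rabs_triang|]. rewrite Rabs_Ropp. lra. }
      fold e0 in Tri. lra. }
    assert (Hx : fst (pt n b) = fst (pt n (a + ss))).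
    { apply Coord. apply cont_px; auto. intros p q. unfold edist.
      rewrite <- sqrt_Rsqr_abs. apply sqrt_le_1_alt. unfold Rsqr. simpl. pose proof (pow2_ge_0 (snd p - snd q)). nra. }
    assert (Hy : snd (pt n b) = snd (pt n (a + ss))).
    { apply Coord. apply cont_py; auto. intros p q. unfold edist.
      rewrite <- sqrt_Rsqr_abs. apply sqrt_le_1_alt. unfold Rsqr. simpl. pose proof (pow2_ge_0 (fst p - fst q)). nra. }
    destruct (pt n b), (pt n (a + ss)). simpl in *. subst. auto. }
  assert (Eb : b = frac (a + ss)).
  { apply (pt_inj n Hn). exact Hb. apply frac_range. rewrite pt_frac by auto. auto. }
  split; auto. split; auto. exists ss. destruct Hstar as [A [B C]]. split; auto.
Qed.

Lemma gstep_H rn r a b : is_lub (rn_set n) rn -> 0 < r -> g_step n rn r a b ->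
  exists s, H n r a s /\ b = frac (a + s).
Proof.
  intros Hl Hr [[_ Hg]|[E Hg]].
  - apply is_g_H; auto.
  - subst. apply is_g_H. apply glim_isg; auto.
Qed.

End L.


Section S.
Variables (n l : nat) (rn r : R) (u : nat -> R).
Hypothesis Hl : (1 <= l)%nat.
Hypothesis Hnl : (4 * l + 2 <= n)%nat.
Hypothesis Hlub : is_lub (rn_set n) rn.
Hypothesis Hstar : is_star n rn l r u.

Definition M := (2 * l + 1)%nat.

Lemma Hn6 : (6 <= n)%nat.
Proof. lia. Qed.
Lemma HM0 : M <> 0%nat.
Proof. unfold M; lia. Qed.
Lemma Hr : 0 < r.
Proof. destruct Hstar as [[A B] _]. auto. Qed.
Lemma Hcyc : vr_cyclic n r.
Proof. destruct Hstar as [[A B] _]. apply (cyc_all n rn r); auto. Qed.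
Lemma Hinp i : (i < M)%nat -> 0 <= u i < 1.
Proof. destruct Hstar as [_ [A _]]. apply A. Qed.

Definition sg (i : nat) := dP (u (i mod M)) (u ((i mod M + 1) mod M)).

Lemma step_i i : (i < M)%nat ->
  H n r (u i) (dP (u i) (u ((i + 1) mod M))) /\ u ((i + 1) mod M) = frac (u i + dP (u i) (u ((i + 1) mod M))).
Proof.
  intros Hi. destruct Hstar as [_ [_ [Hg _]]].
  destruct (gstep_H n Hn6 rn r _ _ Hlub Hr (Hg i Hi)) as [s [Hs Eb]].
  assert (E : dP (u i) (u ((i + 1) mod (2 * l + 1))) = s).
  { unfold dP. rewrite Eb. rewrite <- (frac_id (u i)) at 2 by (apply Hinp; auto).
    rewrite frac_diff. replace (u i + s - u i) with s by ring. apply frac_id. destruct Hs; lra. }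
  unfold M. rewrite E. auto.
Qed.

Fixpoint U (k : nat) : R := match k with O => u O | S k => U k + sg k end.

Lemma U_int k : exists z, U k = u (k mod M) + IZR z.
Proof.
  induction k as [|k [z IH]].
  - exists 0%Z. simpl. rewrite Nat.Div0.mod_0_l. ring.
  - simpl. unfold sg. rewrite IH.
    assert (Hk : (k mod M < M)%nat) by (apply Nat.mod_upper_bound, HM0).
    destruct (step_i (k mod M) Hk) as [_ E].
    assert (Em : (S k) mod M = (k mod M + 1) mod M).
    { replace (S k) with (k + 1)%nat by lia. rewrite Nat.Div0.add_mod. rewrite (Nat.mod_small 1); [auto|]. unfold M; lia. }
    set (d := dP (u (k mod M)) (u ((k mod M + 1) mod M))) in *.
    rewrite Em, E. destruct (frac_int_diff (u (k mod M) + d)) as [w Hw].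
    exists (z + w)%Z. rewrite plus_IZR. lra.
Qed.

Lemma U_H k : H n r (U k) (sg k).
Proof.
  destruct (U_int k) as [z Hz]. rewrite Hz. apply H_int. apply Hn6.
  assert (Hk : (k mod M < M)%nat) by (apply Nat.mod_upper_bound, HM0).
  destruct (step_i (k mod M) Hk) as [A _]. unfold sg. exact A.
Qed.

Definition orbit (W : nat -> R) := forall k, H n r (W k) (W (S k) - W k).

Lemma orbit_U : orbit U.
Proof. intros k. simpl. replace (U k + sg k - U k) with (sg k) by ring. apply U_H. Qed.

Lemma orbit_unique W W' : orbit W -> orbit W' -> W O = W' O -> forall k, W k = W' k.
Proof.
  intros O1 O2 E0 k. induction k as [|k IH]; auto.
  pose proof (O1 k) as A. pose proof (O2 k) as B. rewrite IH in A.
  pose proof (H_unique n r _ _ _ A B). lra.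
Qed.

Lemma orbit_mono W W' : orbit W -> orbit W' -> W O <= W' O -> forall k, W k <= W' k.
Proof.
  intros O1 O2 E0 k. induction k as [|k IH]; auto.
  pose proof (O1 k) as A. pose proof (O2 k) as B.
  destruct (Rle_lt_or_eq_dec _ _ IH) as [L|L].
  - pose proof (H_mono n Hn6 r Hr Hcyc _ _ _ _ A B L). lra.
  - rewrite L in A. pose proof (H_unique n r _ _ _ A B). lra.
Qed.

Lemma orbit_from W m : orbit W -> orbit (fun k => W (m + k)%nat).
Proof. intros O k. replace (m + S k)%nat with (S (m + k)) by lia. apply O. Qed.

Lemma orbit_tr W (j : Z) : orbit W -> orbit (fun k => W k + IZR j / INR n).
Proof.
  intros O k. replace (W (S k) + IZR j / INR n - (W k + IZR j / INR n)) with (W (S k) - W k) by ring.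
  apply H_shift. apply Hn6. apply O.
Qed.

Lemma orbit_ext W W' : (forall k, W k = W' k) -> orbit W -> orbit W'.
Proof. intros E O k. rewrite <- !E. apply O. Qed.

Lemma sg_per k : sg (k + M) = sg k.
Proof. unfold sg. replace (k + M)%nat with (k + 1 * M)%nat by lia. rewrite Nat.Div0.mod_add. auto. Qed.

Lemma U_sum k : U k = u O + sum_f_R0 sg k - sg k.
Proof.
  induction k as [|k IH]; simpl; [ring|]. rewrite IH. ring.
Qed.

Lemma sum_l : sum_f_R0 sg (2 * l) = INR l.
Proof.
  destruct Hstar as [_ [_ [_ Hs]]]. rewrite <- Hs. apply sum_eq. intros i Hi.
  unfold sg. rewrite Nat.mod_small; auto. unfold M; lia.
Qed.

Lemma U_M : U M = U O + INR l.
Proof.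
  unfold M. replace (2 * l + 1)%nat with (S (2 * l)) by lia.
  change (U (S (2 * l))) with (U (2 * l) + sg (2 * l)).
  rewrite (U_sum (2 * l)), sum_l. simpl. ring.
Qed.

Lemma U_per k : U (k + M) = U k + INR l.
Proof.
  induction k as [|k IH].
  - simpl. apply U_M.
  - replace (S k + M)%nat with (S (k + M)) by lia. simpl. rewrite IH, sg_per. ring.
Qed.

Lemma U_per_t k t : U (k + t * M) = U k + INR t * INR l.
Proof.
  induction t as [|t IH].
  - simpl. rewrite Nat.add_0_r. ring.
  - replace (k + S t * M)%nat with ((k + t * M) + M)%nat by lia. rewrite U_per, IH, S_INR. ring.
Qed.

Lemma TL_from i m c : U (i + m) = U i + IZR c / INR n -> forall t, U (i + t + m) = U (i + t) + IZR c / INR n.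
Proof.
  intros E t.
  assert (O1 := orbit_tr _ c (orbit_from U i orbit_U)).
  assert (O2 := orbit_from U (i + m) orbit_U).
  pose proof (orbit_unique _ _ O1 O2) as Hu. simpl in Hu.
  assert (E0 : U (i + 0) + IZR c / INR n = U (i + m + 0)) by (rewrite !Nat.add_0_r; auto).
  specialize (Hu E0 t).
  replace (i + t + m)%nat with (i + m + t)%nat by lia. auto.
Qed.

Lemma TL_iter i m c : (forall t, U (i + t + m) = U (i + t) + IZR c / INR n) ->
  forall t, U (i + t * m) = U i + INR t * (IZR c / INR n).
Proof.
  intros E t. induction t as [|t IH].
  - simpl. rewrite Nat.add_0_r. ring.
  - replace (i + S t * m)%nat with (i + t * m + m)%nat by lia. rewrite E, IH, S_INR. ring.
Qed.

Lemma TL_eq i m c : (forall t, U (i + t + m) = U (i + t) + IZR c / INR n) ->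
  (Z.of_nat M * c = Z.of_nat m * Z.of_nat l * Z.of_nat n)%Z.
Proof.
  intros E. pose proof (TL_iter i m c E M) as A. pose proof (U_per_t i m) as B.
  replace (M * m)%nat with (m * M)%nat in A by lia. rewrite A in B.
  pose proof (NNpos n Hn6) as HN.
  apply eq_IZR. rewrite !mult_IZR, <- !INR_IZR_INZ.
  apply (Rmult_eq_reg_r (/ INR n)); [|apply Rinv_neq_0_compat; lra].
  replace (INR M * IZR c * / INR n) with (INR M * (IZR c / INR n)) by (unfold Rdiv; ring).
  replace (INR m * INR l * INR n * / INR n) with (INR m * INR l) by (field; lra).
  lra.
Qed.

Definition SpU k := exists z, 2 * INR n * U k = IZR z.

Lemma RL i : SpU i -> forall k, U (i + k) + U (i + M * (k + 1) - k) = 2 * U i + INR (k + 1) * INR l.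
Proof.
  intros [z Hz].
  set (W := fun k => 2 * U i + INR (k + 1) * INR l - U (i + M * (k + 1) - k)).
  assert (HM1 : (1 <= M)%nat) by (unfold M; lia).
  assert (OW : orbit W).
  { intros k. unfold W.
    set (A := (i + M * (S k + 1) - S k)%nat).
    assert (EA : (i + M * (k + 1) - k + M)%nat = S A).
    { unfold A. assert (F1 : (M * (S k + 1) = M * (k + 1) + M)%nat) by ring.
      assert (F2 : (k + 1 <= M * (k + 1))%nat) by (apply Nat.le_mul_l; lia). lia. }
    assert (EU : U (i + M * (k + 1) - k) = U (S A) - INR l) by (rewrite <- EA, U_per; ring).
    rewrite EU.
    pose proof (NNpos n Hn6) as HN.
    pose proof (H_refl n Hn6 r Hr Hcyc (U A) (sg A) (z + Z.of_nat (k + 2) * Z.of_nat l * Z.of_nat n)%Z (U_H A)) as HR.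
    assert (Ej : IZR (z + Z.of_nat (k + 2) * Z.of_nat l * Z.of_nat n) / INR n = 2 * U i + INR (k + 2) * INR l).
    { rewrite plus_IZR, !mult_IZR, <- !INR_IZR_INZ, <- Hz. field. lra. }
    rewrite Ej in HR.
    change (U (S A)) with (U A + sg A).
    replace (S k + 1)%nat with (k + 2)%nat by lia.
    replace (2 * U i + INR (k + 1) * INR l - (U A + sg A - INR l)) with (2 * U i + INR (k + 2) * INR l - U A - sg A)
      by (rewrite !plus_INR; simpl; ring).
    replace (2 * U i + INR (k + 2) * INR l - U (i + M * (k + 2) - S k) -
      (2 * U i + INR (k + 2) * INR l - U A - sg A)) with (sg A) by (unfold A; replace (S k + 1)%nat with (k+2)%nat by lia; ring).
    try (match goal with |- H _ _ ?x ?y => replace y with (sg A) by ring end); exact HR. }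
  assert (W0 : W O = U i).
  { unfold W. simpl. replace (i + M * 1 - 0)%nat with (i + M)%nat by lia. rewrite U_per. simpl. ring. }
  pose proof (orbit_unique _ _ (orbit_from U i orbit_U) OW) as Hu.
  intros k. rewrite Hu.
  - unfold W. ring.
  - simpl. rewrite Nat.add_0_r. auto.
Qed.

Lemma RL2 i j : SpU i -> SpU j -> (i <= j)%nat -> forall t,
  U (i + t + 2 * (j - i)) = U (i + t) + 2 * (U j - U i).
Proof.
  intros Si Sj Hij t.
  set (m := (j - i)%nat).
  assert (HM3 : (3 <= M)%nat) by (unfold M; lia).
  set (P := (M * (m + t + 1))%nat).
  assert (HP : (3 * (m + t + 1) <= P)%nat) by (unfold P; apply Nat.mul_le_mono_r; auto).
  set (K := (P - t)%nat).
  set (e := (K - m - t)%nat).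
  pose proof (RL j Sj (m + t)) as R1.
  assert (I1 : (j + (m + t) = i + t + 2 * m)%nat) by (unfold m; lia).
  assert (I2 : (j + M * (m + t + 1) - (m + t) = i + K)%nat) by (unfold K, m; fold P; lia).
  rewrite I1, I2 in R1.
  pose proof (RL i Si K) as R2.
  assert (I3 : (i + M * (K + 1) - K = i + t + e * M)%nat).
  { assert (F1 : (M * (K + 1) = M * K + M)%nat) by ring.
    assert (F2 : (e * M = K * M - (m + t) * M)%nat) by (unfold e; rewrite <- Nat.mul_sub_distr_r; f_equal; lia).
    assert (F3 : ((m + t) * M + M = P)%nat) by (unfold P; ring).
    assert (F4 : (K + t = P)%nat) by (unfold K; lia).
    assert (F5 : ((m + t) * M <= K * M)%nat) by (apply Nat.mul_le_mono_r; unfold K; lia).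
    assert (F6 : (K * M = M * K)%nat) by ring.
    lia. }
  rewrite I3, U_per_t in R2.
  assert (IK : INR (K + 1) = INR (m + t + 1) + INR e).
  { rewrite <- plus_INR. f_equal. unfold e. lia. }
  rewrite IK in R2. lra.
Qed.

Lemma IZR_negnat x : IZR (- Z.of_nat x) = - INR x.
Proof. rewrite opp_IZR, <- INR_IZR_INZ. auto. Qed.

Lemma ZA g n1 q : (1 <= g)%nat -> n = (n1 * g)%nat -> M = (q * g)%nat ->
  forall i, U (i + q) = U i + INR (n1 * l) / INR n.
Proof.
  intros Hg En EM i. set (p := (n1 * l)%nat).
  pose proof (NNpos n Hn6) as HN.
  set (V := fun j k => U (i + j * q + k) + IZR (- Z.of_nat (j * p)) / INR n).
  assert (OV : forall j, orbit (V j)).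
  { intros j. exact (orbit_tr _ _ (orbit_from U (i + j * q) orbit_U)). }
  set (z := fun j => V j O).
  assert (Vq : forall j, V j q = z (S j) + INR p / INR n).
  { intros j. unfold z, V. rewrite !IZR_negnat.
    replace (i + j * q + q)%nat with (i + S j * q + 0)%nat by lia.
    replace (S j * p)%nat with (j * p + p)%nat by lia. rewrite plus_INR. field. lra. }
  assert (Up : z O <= z 1%nat -> forall j, z j <= z (S j)).
  { intros H0 j. induction j as [|j IH]; auto.
    pose proof (orbit_mono _ _ (OV j) (OV (S j)) IH q) as A. rewrite !Vq in A. lra. }
  assert (Dn : z 1%nat <= z O -> forall j, z (S j) <= z j).
  { intros H0 j. induction j as [|j IH]; auto.
    pose proof (orbit_mono _ _ (OV (S j)) (OV j) IH q) as A. rewrite !Vq in A. lra. }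
  assert (zg : z g = z O).
  { unfold z, V. rewrite !IZR_negnat. simpl. rewrite !Nat.add_0_r.
    replace (g * q)%nat with M by lia. rewrite U_per.
    assert (Hn1 : 0 < INR n1).
    { apply lt_0_INR. destruct n1; lia. }
    replace (g * p)%nat with (l * n)%nat by (unfold p; rewrite En; ring).
    rewrite mult_INR. field. lra. }
  assert (Eg : g = S (g - 1)) by lia.
  assert (E01 : z 1%nat = z O).
  { destruct (Rle_or_lt (z O) (z 1%nat)) as [L|L].
    - assert (C : forall j, z 1%nat <= z (S j)).
      { intros j. induction j as [|j IH]; [lra|]. pose proof (Up L (S j)). lra. }
      pose proof (C (g - 1)%nat) as C'. rewrite <- Eg, zg in C'. lra.
    - assert (C : forall j, z (S j) <= z 1%nat).
      { intros j. induction j as [|j IH]; [lra|]. pose proof (Dn ltac:(lra) (S j)). lra. }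
      pose proof (C (g - 1)%nat) as C'. rewrite <- Eg, zg in C'. lra. }
  unfold z, V in E01. rewrite !IZR_negnat in E01. simpl in E01.
  rewrite !Nat.add_0_r in E01. replace (q + 0)%nat with q in E01 by lia.
  replace (p + 0)%nat with p in E01 by lia. simpl in E01.
  unfold Rdiv in *. rewrite Ropp_0, Rmult_0_l, Rplus_0_r in E01. lra.
Qed.

Lemma NT q m c g n1 : M = (q * g)%nat -> n = (n1 * g)%nat -> Nat.gcd n M = g -> (1 <= g)%nat ->
  (q * c = m * l * n1)%nat -> Nat.divide q m.
Proof.
  intros EM En Eg Hg E.
  assert (G1 : Nat.gcd n1 q = 1%nat).
  { rewrite EM, En, Nat.gcd_mul_mono_r in Eg. destruct (Nat.gcd n1 q) as [|[|d]]; nia. }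
  assert (G2 : Nat.gcd q l = 1%nat).
  { apply Nat.divide_1_r.
    assert (D1 : Nat.divide (Nat.gcd q l) M) by (apply (Nat.divide_trans _ q); [apply Nat.gcd_divide_l| exists g; lia]).
    assert (D2 : Nat.divide (Nat.gcd q l) (2 * l)) by (apply Nat.divide_mul_r, Nat.gcd_divide_r).
    pose proof (Nat.divide_sub_r _ _ _ D1 D2) as D3. replace (M - 2 * l)%nat with 1%nat in D3 by (unfold M; lia). auto. }
  assert (D : Nat.divide q (l * (n1 * m))) by (exists c; lia).
  apply Nat.gauss in D; auto.
  apply Nat.gauss in D; auto. rewrite Nat.gcd_comm; auto.
Qed.

Lemma C2 g n1 q i j : M = (q * g)%nat -> n = (n1 * g)%nat -> Nat.gcd n M = g -> (1 <= g)%nat ->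
  SpU i -> SpU j -> (i <= j)%nat -> Nat.divide q (j - i).
Proof.
  intros EM En Eg Hg Si Sj Hij.
  pose proof (NNpos n Hn6) as HN.
  destruct Si as [zi Hzi], Sj as [zj Hzj].
  destruct (Z.Even_or_Odd (zj - zi)) as [[c Hc]|[c Hc]].
  - assert (E : U (i + (j - i)) = U i + IZR c / INR n).
    { replace (i + (j - i))%nat with j by lia.
      apply (Rmult_eq_reg_l (2 * INR n)); [|lra].
      replace (2 * INR n * (U i + IZR c / INR n)) with (2 * INR n * U i + IZR (2 * c)) by (rewrite mult_IZR; field; lra).
      rewrite Hzi, Hzj, <- plus_IZR, <- Hc. f_equal. ring. }
    pose proof (TL_eq _ _ _ (TL_from _ _ _ E)) as T.
    assert (Hc0 : (0 <= c)%Z).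
    { assert (0 <= Z.of_nat (j - i) * Z.of_nat l * Z.of_nat n)%Z by (apply Z.mul_nonneg_nonneg; [apply Z.mul_nonneg_nonneg|]; lia).
      assert (0 < Z.of_nat M)%Z by (unfold M; lia). nia. }
    rewrite <- (Z2Nat.id c) in T by auto.
    rewrite <- !Nat2Z.inj_mul in T. apply Nat2Z.inj in T.
    apply (NT q (j - i) (Z.to_nat c) g n1); auto.
    rewrite EM, En in T. apply (Nat.mul_cancel_r _ _ g); [lia|].
    replace (q * Z.to_nat c * g)%nat with (q * g * Z.to_nat c)%nat by ring. rewrite T. ring.
  - exfalso.
    assert (E : forall t, U (i + t + 2 * (j - i)) = U (i + t) + IZR (zj - zi) / INR n).
    { intros t. assert (Si' : SpU i) by (exists zi; auto). assert (Sj' : SpU j) by (exists zj; auto).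
      rewrite (RL2 i j Si' Sj' Hij).
      f_equal. rewrite minus_IZR, <- Hzi, <- Hzj. field. lra. }
    pose proof (TL_eq _ _ _ E) as T. rewrite Hc in T.
    assert (T2 : (2 * (2 * (Z.of_nat l * c) + Z.of_nat l + c) + 1 = 2 * (Z.of_nat (j - i) * Z.of_nat l * Z.of_nat n))%Z).
    { transitivity (Z.of_nat M * (2 * c + 1))%Z.
      - replace (Z.of_nat M) with (2 * Z.of_nat l + 1)%Z by (unfold M; lia). ring.
      - rewrite T. replace (Z.of_nat (2 * (j - i))) with (2 * Z.of_nat (j - i))%Z by lia. ring. }
    remember (Z.of_nat l * c)%Z as X. remember (Z.of_nat (j - i) * Z.of_nat l * Z.of_nat n)%Z as Y. lia.
Qed.

Lemma C3 i j : (i < j < M)%nat -> u i = u j -> False.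
Proof.
  intros Hij Eu. pose proof (NNpos n Hn6) as HN.
  destruct (U_int i) as [zi Hzi]. destruct (U_int j) as [zj Hzj].
  rewrite Nat.mod_small in Hzi, Hzj by lia.
  set (c := ((zj - zi) * Z.of_nat n)%Z).
  assert (E : U (i + (j - i)) = U i + IZR c / INR n).
  { replace (i + (j - i))%nat with j by lia. unfold c. rewrite mult_IZR, minus_IZR, <- INR_IZR_INZ.
    rewrite Hzi, Hzj, Eu. field. lra. }
  pose proof (TL_eq _ _ _ (TL_from _ _ _ E)) as T. unfold c in T.
  assert (T2 : (Z.of_nat M * (zj - zi) = Z.of_nat (j - i) * Z.of_nat l)%Z).
  { apply (Z.mul_cancel_r _ _ (Z.of_nat n)); [lia|]. rewrite <- T. ring. }
  assert (Hc0 : (0 <= zj - zi)%Z).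
  { assert (0 <= Z.of_nat (j - i) * Z.of_nat l)%Z by (apply Z.mul_nonneg_nonneg; lia).
    assert (0 < Z.of_nat M)%Z by (unfold M; lia). nia. }
  rewrite <- (Z2Nat.id (zj - zi)) in T2 by auto.
  rewrite <- !Nat2Z.inj_mul in T2. apply Nat2Z.inj in T2.
  assert (G : Nat.gcd M l = 1%nat).
  { apply Nat.divide_1_r.
    assert (D2 : Nat.divide (Nat.gcd M l) (2 * l)) by (apply Nat.divide_mul_r, Nat.gcd_divide_r).
    pose proof (Nat.divide_sub_r _ _ _ (Nat.gcd_divide_l M l) D2) as D3.
    replace (M - 2 * l)%nat with 1%nat in D3 by (unfold M; lia). auto. }
  assert (D : Nat.divide M (l * (j - i))) by (exists (Z.to_nat (zj - zi)); lia).
  apply Nat.gauss in D; auto.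
  destruct D as [w Hw]. destruct w; lia.
Qed.

Lemma pt_vert k : pt n (INR k / INR n) = vert n (INR k).
Proof.
  pose proof (NNpos n Hn6) as HN.
  rewrite (pt_on_edge n (Z.of_nat k)) by (rewrite <- INR_IZR_INZ; replace (INR n * (INR k / INR n)) with (INR k) by (field; lra); lra).
  rewrite <- INR_IZR_INZ. replace (INR n * (INR k / INR n)) with (INR k) by (field; lra).
  unfold vert, cth, sth. f_equal; ring.
Qed.

Lemma pt_mid k : pt n ((INR k + 1/2) / INR n) =
  ((fst (vert n (INR k)) + fst (vert n (INR k + 1))) / 2, (snd (vert n (INR k)) + snd (vert n (INR k + 1))) / 2).
Proof.
  pose proof (NNpos n Hn6) as HN.
  rewrite (pt_on_edge n (Z.of_nat k)) by (rewrite <- INR_IZR_INZ; replace (INR n * ((INR k + 1/2) / INR n)) with (INR k + 1/2) by (field; lra); lra).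
  rewrite <- INR_IZR_INZ. replace (INR n * ((INR k + 1/2) / INR n)) with (INR k + 1/2) by (field; lra).
  unfold vert, cth, sth. simpl. f_equal; field.
Qed.

Definition Sp i := exists z, 2 * INR n * u i = IZR z.

Lemma spec_char i : (i < M)%nat -> (is_special n (pt n (u i)) <-> Sp i).
Proof.
  intros Hi. pose proof (NNpos n Hn6) as HN. pose proof (Hinp i Hi) as Hu.
  split.
  - intros [k [Hk [E|E]]].
    + assert (R1 : 0 <= INR k / INR n < 1).
      { assert (INR k < INR n) by (apply lt_INR; auto). split.
        unfold Rdiv; apply Rmult_le_pos; [apply pos_INR | apply Rlt_le, Rinv_0_lt_compat; lra].
        apply Rmult_lt_reg_r with (INR n); auto. unfold Rdiv. rewrite Rmult_assoc, Rinv_l by lra. lra. }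
      rewrite <- pt_vert in E. apply (pt_inj n Hn6 _ _ Hu R1) in E.
      exists (2 * Z.of_nat k)%Z. rewrite E, mult_IZR, <- INR_IZR_INZ. field. lra.
    + assert (R1 : 0 <= (INR k + 1/2) / INR n < 1).
      { assert (INR k + 1 <= INR n) by (rewrite <- S_INR; apply le_INR; lia). pose proof (pos_INR k). split.
        unfold Rdiv; apply Rmult_le_pos; [lra | apply Rlt_le, Rinv_0_lt_compat; lra].
        apply Rmult_lt_reg_r with (INR n); auto. unfold Rdiv. rewrite Rmult_assoc, Rinv_l by lra. lra. }
      rewrite <- pt_mid in E. apply (pt_inj n Hn6 _ _ Hu R1) in E.
      exists (2 * Z.of_nat k + 1)%Z. rewrite E, plus_IZR, mult_IZR, <- INR_IZR_INZ. field. lra.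
  - intros [z Hz].
    assert (Hz0 : (0 <= z)%Z) by (apply le_IZR; rewrite <- Hz; nra).
    assert (Hz1 : (z < 2 * Z.of_nat n)%Z) by (apply lt_IZR; rewrite mult_IZR, <- INR_IZR_INZ, <- Hz; nra).
    destruct (Z.Even_or_Odd z) as [[k Hk]|[k Hk]].
    + exists (Z.to_nat k). split; [lia|]. left.
      rewrite <- pt_vert. f_equal. rewrite INR_IZR_INZ, Z2Nat.id by lia.
      apply (Rmult_eq_reg_l (2 * INR n)); [|lra]. rewrite Hz, Hk, mult_IZR. field. lra.
    + exists (Z.to_nat k). split; [lia|]. right.
      rewrite <- pt_mid. f_equal. rewrite INR_IZR_INZ, Z2Nat.id by lia.
      apply (Rmult_eq_reg_l (2 * INR n)); [|lra]. rewrite Hz, Hk, plus_IZR, mult_IZR. field. lra.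
Qed.

Lemma SpU_Sp k : SpU k <-> Sp (k mod M).
Proof.
  destruct (U_int k) as [w Hw]. unfold SpU, Sp. rewrite Hw. split.
  - intros [z Hz]. exists (z - 2 * Z.of_nat n * w)%Z. rewrite minus_IZR, !mult_IZR, <- INR_IZR_INZ, <- Hz. ring.
  - intros [z Hz]. exists (z + 2 * Z.of_nat n * w)%Z. rewrite plus_IZR, !mult_IZR, <- INR_IZR_INZ, <- Hz. ring.
Qed.

Lemma final : num_special n l u 0 \/ num_special n l u (Nat.gcd n (2 * l + 1)).
Proof.
  fold M. set (g := Nat.gcd n M).
  destruct (Nat.gcd_divide_l n M) as [n1 En]. destruct (Nat.gcd_divide_r n M) as [q EM]. fold g in En, EM.
  assert (Hg : (1 <= g)%nat).
  { destruct g eqn:E; [|lia]. exfalso. rewrite Nat.mul_0_r in EM. apply HM0. auto. }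
  assert (Hq : (1 <= q)%nat) by (destruct q; [rewrite Nat.mul_0_l in EM; exfalso; apply HM0; auto| lia]).
  pose proof (NNpos n Hn6) as HN.
  destruct (Classical_Prop.classic (exists i, (i < M)%nat /\ Sp i)) as [[i0 [Hi0 S0]]|Hno].
  - right. set (i1 := (i0 mod q)%nat).
    assert (Hi1 : (i1 < q)%nat) by (apply Nat.mod_upper_bound; lia).
    set (a := (i0 / q)%nat).
    assert (Ei0 : i0 = (i1 + a * q)%nat) by (unfold i1, a; pose proof (Nat.div_mod_eq i0 q); lia).
    assert (Ha : (a < g)%nat).
    { destruct (le_lt_dec g a) as [L|L]; auto. exfalso. assert (g * q <= a * q)%nat by (apply Nat.mul_le_mono_r; auto). lia. }
    assert (SU0 : SpU i0) by (apply SpU_Sp; rewrite Nat.mod_small; auto).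
    assert (SUt : forall t, SpU (i0 + t * q)).
    { intros t. induction t as [|t [z Hz]].
      - rewrite Nat.mul_0_l, Nat.add_0_r. auto.
      - exists (z + 2 * Z.of_nat (n1 * l))%Z.
        replace (i0 + S t * q)%nat with (i0 + t * q + q)%nat by lia.
        rewrite (ZA g n1 q Hg En EM), plus_IZR, mult_IZR, <- INR_IZR_INZ, <- Hz. field. lra. }
    assert (Hidx : forall k, (k < g)%nat -> (i1 + k * q < M)%nat).
    { intros k Hk. assert (k * q <= (g - 1) * q)%nat by (apply Nat.mul_le_mono_r; lia).
      assert ((g - 1) * q + q = g * q)%nat by (destruct g; [lia|]; simpl; lia). lia. }
    set (f := fun k => pt n (u (i1 + k * q)%nat)).
    exists (map f (seq 0 g)). split; [|split].
    + apply NoDup_map_NoDup_ForallPairs; [|apply seq_NoDup].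
      intros x y Hx Hy Exy. apply in_seq in Hx. apply in_seq in Hy.
      unfold f in Exy. apply pt_inj in Exy; try apply Hinp; try apply Hidx; try lia.
      destruct (lt_eq_lt_dec x y) as [[L|L]|L]; auto; exfalso.
      * apply (C3 (i1 + x * q) (i1 + y * q)); auto. split; [|apply Hidx; lia].
        assert (x * q < y * q)%nat by (apply Nat.mul_lt_mono_pos_r; lia). lia.
      * apply (C3 (i1 + y * q) (i1 + x * q)); auto. split; [|apply Hidx; lia].
        assert (y * q < x * q)%nat by (apply Nat.mul_lt_mono_pos_r; lia). lia.
    + rewrite length_map, length_seq. auto.
    + intros p. split.
      * intros Hp. apply in_map_iff in Hp. destruct Hp as [k [Ek Hk]]. apply in_seq in Hk.
        assert (Hk' : (k < g)%nat) by lia.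
        split; [exists (i1 + k * q)%nat; split; [apply Hidx; auto| auto]|].
        rewrite <- Ek. unfold f. apply spec_char; [apply Hidx; auto|].
        pose proof (SUt (k + g - a)%nat) as St. apply SpU_Sp in St.
        replace (i0 + (k + g - a) * q)%nat with ((i1 + k * q) + 1 * M)%nat in St.
        { rewrite Nat.Div0.mod_add, Nat.mod_small in St by (apply Hidx; auto); auto. }
        rewrite Ei0, EM.
        assert ((k + g - a) * q = k * q + g * q - a * q)%nat.
        { rewrite <- Nat.mul_add_distr_r, <- Nat.mul_sub_distr_r. f_equal. }
        assert (a * q <= g * q)%nat by (apply Nat.mul_le_mono_r; lia). lia.
      * intros [[i [Hi Ep]] Hs]. rewrite Ep in Hs. apply spec_char in Hs; auto.
        assert (SUi : SpU i) by (apply SpU_Sp; rewrite Nat.mod_small; auto).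
        assert (Emod : (i mod q = i1)%nat).
        { unfold i1. destruct (le_lt_dec i0 i) as [L|L].
          - destruct (C2 g n1 q i0 i EM En eq_refl Hg SU0 SUi L) as [d Hd].
            replace i with (i0 + d * q)%nat by lia. apply Nat.Div0.mod_add.
          - destruct (C2 g n1 q i i0 EM En eq_refl Hg SUi SU0 ltac:(lia)) as [d Hd].
            replace i0 with (i + d * q)%nat by lia. symmetry. apply Nat.Div0.mod_add. }
        apply in_map_iff. exists (i / q)%nat. split.
        -- unfold f. rewrite Ep. f_equal. f_equal. pose proof (Nat.div_mod_eq i q). lia.
        -- apply in_seq. split; [lia|]. simpl.
           destruct (le_lt_dec g (i / q)) as [L|L]; auto. exfalso.
           assert (g * q <= (i / q) * q)%nat by (apply Nat.mul_le_mono_r; auto).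
           pose proof (Nat.div_mod_eq i q) as DM. rewrite (Nat.mul_comm q (i / q)) in DM.
           rewrite (Nat.mul_comm q g) in EM. change (2 * l + 1)%nat with M in Hi. lia.
  - left. exists nil. split; [constructor|split; [auto|]].
    intros p. split; [intros []|]. intros [[i [Hi Ep]] Hs]. exfalso. apply Hno.
    exists i. split; auto. rewrite Ep in Hs. apply spec_char; auto.
Qed.

End S.

Theorem lemma5p13_aux (n l : nat) (rn r : R) (u : nat -> R) :
  (1 <= l)%nat -> (4 * l + 2 <= n)%nat ->
  is_lub (rn_set n) rn ->
  is_star n rn l r u ->
  num_special n l u 0 \/ num_special n l u (Nat.gcd n (2 * l + 1)).
Proof. intros. eapply final; eauto. Qed.


Theorem lemma5p13 (n l : nat) (rn r : R) (u : nat -> R) :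
  (1 <= l)%nat -> (4 * l + 2 <= n)%nat ->
  is_lub (rn_set n) rn ->
  is_star n rn l r u ->
  num_special n l u 0 \/ num_special n l u (Nat.gcd n (2 * l + 1)).
Proof. exact (lemma5p13_aux n l rn r u). Qed.
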